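(* Assume every node of $G$ belongs to at least one $h$-clique. Let $f^*$ be any maximum flow in $\mathcal{H}$. Then in the residual graph $\mathcal{H}_{f^*}$ there is a directed path from $t$ to every node $v\in V$.
   Context: Let $G=(V,E)$ be a finite simple undirected graph and $h\ge2$. An $h$-clique is a set of $h$ pairwise adjacent nodes; $\mu_h(G[W])$ counts $h$-cliques inside $W$; for nonempty $W$, $\rho_h(W)=\mu_h(G[W])/|W|$; $\rho_h^*=\max_{\emptyset\ne W\subseteq V}\rho_h(W)$; $deg_G(v,h)$ is the number of $h$-cliques containing $v$; $\Lambda$ is the set of $(h-1)$-cliques of $G$ contained in some $h$-clique. Flow network $\mathcal{H}=(V_\mathcal{H},E_\mathcal{H},c)$: $V_\mathcal{H}=V\cup\Lambda\cup\{s,t\}$; for $v\in V$: arcs $(s,v)$ cap. $deg_G(v,h)$, $(v,t)$ cap. $h\rho_h^*$, $(v,s),(t,v)$ cap. $0$; for $\lambda\in\Lambda$, $v\in\lambda$: $(\lambda,v)$ cap. $+\infty$, $(v,\lambda)$ cap. $0$; for $\lambda\in\Lambda$, $v\in V$ with $\lambda\cup\{v\}$ an $h$-clique: $(v,\lambda)$ cap. $1$, $(\lambda,v)$ cap. $0$; no other arcs. A flow $f$ satisfies $f(u,v)\le c(u,v)$, $f(v,u)=-f(u,v)$, conservation at nodes other than $s,t$; value $\sum_v f(s,v)$. The residual graph $\mathcal{H}_{f}$ has an arc $(u,v)$ whenever $(u,v)\in E_\mathcal{H}$ and $c(u,v)-f(u,v)>0$. *)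

(* Defs.v *)
From HB Require Import structures.
From mathcomp Require Import all_boot all_order all_algebra.
From mathcomp Require Import reals.
Set Implicit Arguments. Unset Strict Implicit. Unset Printing Implicit Defensive.
Import Order.TTheory GRing.Theory Num.Theory.
Local Open Scope ring_scope.

Section Defs.
Variables (T : finType) (e : rel T) (h : nat).

Definition simple_graph : Prop := symmetric e /\ irreflexive e.

Definition is_clique (k : nat) (S : {set T}) : bool :=
  (#|S| == k) && [forall x in S, forall y in S, (x != y) ==> e x y].

Definition mu (W : {set T}) : nat := #|[set S : {set T} | is_clique h S && (S \subset W)]|.

Definition hdeg (v : T) : nat := #|[set S : {set T} | is_clique h S && (v \in S)]|.

Definition Lambda : {set {set T}} :=
  [set l : {set T} | is_clique h.-1 l && [exists S : {set T}, is_clique h S && (l \subset S)]].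

Variable R : realType.

Definition rho (W : {set T}) : R := (mu W)%:R / (#|W|)%:R.

(* rho_h^* = max over nonempty W (all values are >= 0, so 0 is a neutral start) *)
Definition rho_star : R := \big[Num.max/0]_(W : {set T} | W != set0) rho W.

Definition lam_t := {l : {set T} | l \in Lambda}.
Definition hnode : finType := (bool + (T + lam_t))%type.
Definition Hs : hnode := inl true.
Definition Ht : hnode := inl false.
Definition Hv (v : T) : hnode := inr (inl v).
Definition Hl (l : lam_t) : hnode := inr (inr l).

Definition is_arc (x y : hnode) : bool :=
  match x, y with
  | inl true, inr (inl _) => true
  | inr (inl _), inl false => true
  | inr (inl _), inl true => true
  | inl false, inr (inl _) => true
  | inr (inr l), inr (inl v) => (v \in val l) || is_clique h (v |: val l)
  | inr (inl v), inr (inr l) => (v \in val l) || is_clique h (v |: val l)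
  | _, _ => false
  end.

(* capacities; None stands for +infinity; non-arcs have capacity 0 *)
Definition cap (x y : hnode) : option R :=
  match x, y with
  | inl true, inr (inl v) => Some (hdeg v)%:R
  | inr (inl _), inl false => Some (h%:R * rho_star)
  | inr (inr l), inr (inl v) => if v \in val l then None else Some 0
  | inr (inl v), inr (inr l) => if is_clique h (v |: val l) then Some 1 else Some 0
  | _, _ => Some 0
  end.

Definition le_cap (a : R) (c : option R) : bool :=
  if c is Some c' then a <= c' else true.

Definition is_flow (f : hnode -> hnode -> R) : Prop :=
  [/\ forall x y, le_cap (f x y) (cap x y),
      forall x y, f y x = - f x y &
      forall x, x != Hs -> x != Ht -> \sum_(y : hnode) f x y = 0].

Definition flow_value (f : hnode -> hnode -> R) : R := \sum_(v : T) f Hs (Hv v).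

Definition is_max_flow (f : hnode -> hnode -> R) : Prop :=
  is_flow f /\ forall g, is_flow g -> flow_value g <= flow_value f.

Definition residual_arc (f : hnode -> hnode -> R) (x y : hnode) : bool :=
  is_arc x y && (if cap x y is Some c then 0 < c - f x y else true).

Definition res_reachable (f : hnode -> hnode -> R) (x y : hnode) : Prop :=
  exists p : seq hnode, path (residual_arc f) x p /\ last x p = y.

End Defs.

(* Main.v *)
Require Import Defs.
From HB Require Import structures.
From mathcomp Require Import all_boot all_order all_algebra.
From mathcomp Require Import reals.
From mathcomp Require Import lra.
Set Implicit Arguments. Unset Strict Implicit. Unset Printing Implicit Defensive.
Import Order.TTheory GRing.Theory Num.Theory.
Local Open Scope ring_scope.

Section Comb.
Variables (T : finType) (e : rel T) (h : nat).

Lemma lam_of (S : {set T}) (v : T) : is_clique e h S -> v \in S -> S :\ v \in Lambda e h.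
Proof.
move=> hS hv; rewrite inE; apply/andP; split.
  move: hS; rewrite /is_clique => /andP[/eqP hc /forallP hall].
  apply/andP; split.
    by rewrite -hc (cardsD1 v S) hv.
  apply/forallP => x; apply/implyP => hx; apply/forallP => y; apply/implyP => hy.
  have := hall x; move/implyP/(_ (subsetP (subD1set S v) x hx))/forallP/(_ y)/implyP.
  by apply; apply: (subsetP (subD1set S v)).
by apply/existsP; exists S; rewrite hS subD1set.
Qed.

Lemma per_vertex (W : {set T}) (L : pred (lam_t e h)) (v : T) :
  (forall l, L l -> val l \subset W) -> v \in W ->
  (hdeg e h v <= #|[set S | is_clique e h S && (v \in S) && (S \subset W)]|
     + #|[set l | ~~ L l & is_clique e h (v |: val l)]|)%N.
Proof.
move=> hL hv.
pose A := [set S | is_clique e h S && (v \in S)].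
pose B := [set S : {set T} | S \subset W].
rewrite /hdeg -/A -(cardsID B A); apply: leq_add.
  by apply: subset_leq_card; apply/subsetP => S; rewrite !inE.
pose X := [set l | ~~ L l & is_clique e h (v |: val l)].
apply: leq_trans (leq_imset_card (fun l : lam_t e h => v |: val l) (mem X)).
apply/subset_leq_card/subsetP => S; rewrite !inE => /andP[hW /andP[hS hvS]].
apply/imsetP; exists (exist _ (S :\ v) (lam_of hS hvS)) => /=; last by rewrite setD1K.
rewrite inE setD1K // hS andbT; apply/negP => /hL hsub.
move/negP: hW; apply; apply/subsetP => x hx.
case: (eqVneq x v) => [-> //|hxv]; apply: (subsetP hsub); by rewrite /= !inE hxv hx.
Qed.

Lemma double_count (W : {set T}) :
  (\sum_(v in W) #|[set S | is_clique e h S && (v \in S) && (S \subset W)]| = h * mu e h W)%N.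
Proof.
pose C := [set S : {set T} | is_clique e h S && (S \subset W)].
have E1 : forall v, #|[set S | is_clique e h S && (v \in S) && (S \subset W)]| =
    (\sum_(S in C) (v \in S))%N.
  move=> v; rewrite -sum1_card big_mkcond [RHS]big_mkcond /=; apply: eq_bigr => S _.
  by rewrite !inE; case: (is_clique e h S); case: (v \in S); case: (S \subset W).
rewrite (eq_bigr _ (fun v _ => E1 v)) exchange_big /=.
rewrite /mu -/C mulnC -sum_nat_const; apply: eq_bigr => S; rewrite inE => /andP[/andP[/eqP hc _] hsub].
rewrite -hc -sum1_card big_mkcond [RHS]big_mkcond /=; apply: eq_bigr => v _.
by case: (boolP (v \in S)) => hvs; [rewrite (subsetP hsub v hvs) | case: (v \in W)].
Qed.
End Comb.

Section Basics.
Variables (T : finType) (e : rel T) (h : nat) (R : realType).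
Local Notation node := (hnode e h).
Local Notation sN := (Hs e h).
Local Notation tN := (Ht e h).

Lemma rho_star_ge0 : 0 <= rho_star e h R.
Proof.
rewrite /rho_star; apply: (big_ind (fun z : R => 0 <= z)) => //.
  by move=> x y hx hy; rewrite le_max hx.
by move=> W _; rewrite /rho divr_ge0.
Qed.

Lemma mu_le (W : {set T}) : W != set0 -> (mu e h W)%:R <= rho_star e h R * (#|W|)%:R.
Proof.
move=> W0.
have hW : (0 : R) < (#|W|)%:R by rewrite ltr0n card_gt0.
have : rho e h R W <= rho_star e h R.
  by rewrite /rho_star; apply: le_bigmax_cond.
by rewrite /rho ler_pdivrMr.
Qed.


Definition lb (x y : node) : R := odflt 0 (cap R x y).

Lemma cap_ge0 (x y : node) c : cap R x y = Some c -> 0 <= c.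
Proof.
case: x => [[]|[v|l]]; case: y => [[]|[w|m]] //=; try (case: ifP => _);
  try (case=> <-); rewrite ?ler0n ?mulr_ge0 ?rho_star_ge0 //.
Qed.

Lemma lb_ge0 (x y : node) : 0 <= lb x y.
Proof. rewrite /lb; case E: (cap R x y) => [c|] //=; exact: cap_ge0 E. Qed.

Lemma arc_sym (x y : node) : is_arc x y = is_arc y x.
Proof. by case: x => [[]|[v|l]]; case: y => [[]|[w|m]]. Qed.

Lemma noarc_cap (x y : node) : ~~ is_arc x y -> cap R x y = Some 0.
Proof.
case: x => [[]|[v|l]]; case: y => [[]|[w|m]] //=.
- by rewrite negb_or => /andP[_ /negbTE ->].
- by rewrite negb_or => /andP[/negbTE -> _].
Qed.

Lemma le_cap0 (a : R) (x y : node) : ~~ is_arc x y -> le_cap a (cap R x y) = (a <= 0).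
Proof. by move/noarc_cap->. Qed.

Lemma sum_node (F : node -> R) :
  \sum_x F x = F sN + F tN + \sum_v F (Hv e h v) + \sum_l F (Hl l).
Proof. by rewrite big_sumType big_bool big_sumType /= !addrA. Qed.

Variable f : node -> node -> R.
Hypothesis hflow : is_flow f.

Lemma fskew (x y : node) : f y x = - f x y.
Proof. by case: hflow. Qed.

Lemma fcap (x y : node) : le_cap (f x y) (cap R x y).
Proof. by case: hflow. Qed.

Lemma fcons (x : node) : x != sN -> x != tN -> \sum_y f x y = 0.
Proof. by case: hflow => _ _; apply. Qed.

Lemma fcap0 (x y : node) : cap R x y = Some 0 -> f x y <= 0.
Proof. by move=> E; have := fcap x y; rewrite E. Qed.

Lemma L2 (x y : node) : ~~ residual_arc f x y -> lb x y <= f x y.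
Proof.
rewrite /residual_arc /lb; case: (boolP (is_arc x y)) => /= harc.
  case: (cap R x y) => [c|] //=; rewrite -leNgt subr_le0 //.
move=> _; rewrite noarc_cap //=.
rewrite arc_sym in harc; have := fcap0 (noarc_cap harc).
by rewrite fskew oppr_le0.
Qed.

Lemma skew_sum (P : pred node) : \sum_(x | P x) \sum_(y | P y) f x y = 0.
Proof.
set S := (X in X = 0).
have : S = - S.
  rewrite {1}/S exchange_big /= -sumrN; apply: eq_bigr => y _.
  rewrite -sumrN; apply: eq_bigr => x _; exact: fskew.
lra.
Qed.

Lemma cut_sum (P : pred node) : (forall x, P x -> (x != sN) && (x != tN)) ->
  \sum_(x | P x) \sum_(y | ~~ P y) f x y = 0.
Proof.
move=> hP.
have : \sum_(x | P x) \sum_y f x y = 0.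
  by rewrite big1 // => x /hP /andP[h1 h2]; apply: fcons.
rewrite (eq_bigr (fun x => \sum_(y | P y) f x y + \sum_(y | ~~ P y) f x y)).
  by rewrite big_split /= skew_sum add0r.
by move=> x _; rewrite (bigID P).
Qed.


Definition U (x y a b : node) : R :=
  ((a == x) && (b == y))%:R - ((a == y) && (b == x))%:R.

Fixpoint pf (x : node) (p : seq node) (a b : node) : R :=
  if p is y :: p' then U x y a b + pf y p' a b else 0.

Fixpoint step (x : node) (p : seq node) (a b : node) : bool :=
  if p is y :: p' then ((a == x) && (b == y)) || step y p' a b else false.

Lemma pf_skew x p a b : pf x p b a = - pf x p a b.
Proof.
elim: p x => [|y p IH] x /=; first by rewrite oppr0.
by rewrite IH opprD /U opprB [(b == x) && _]andbC [(b == y) && _]andbC.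
Qed.

Lemma sum_ind (y : node) : \sum_(b : node) ((b == y)%:R : R) = 1.
Proof.
rewrite (bigD1 y) //= eqxx big1 ?addr0 // => b /negbTE -> //.
Qed.

Lemma pf_sum x p a : \sum_b pf x p a b = (a == x)%:R - (a == last x p)%:R.
Proof.
elim: p x => [|y p IH] x /=; first by rewrite big1 ?subrr.
rewrite big_split /= IH /U sumrB.
have E : forall z w : node, \sum_(b : node) (((a == z) && (b == w))%:R : R) = (a == z)%:R.
  by move=> z w; case: (a == z) => /=; [rewrite sum_ind | rewrite big1].
by rewrite !E; lra.
Qed.

Lemma U_le1 x y a b : U x y a b <= 1.
Proof. by rewrite /U; case: (_ && _); case: (_ && _) => /=; lra. Qed.

Lemma pf_le x p a b : pf x p a b <= (size p)%:R.
Proof.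
elim: p x => [|y p IH] x //=.
by rewrite -addn1 natrD addrC lerD ?U_le1.
Qed.

Lemma pf_nostep x p a b : ~~ step x p a b -> pf x p a b <= 0.
Proof.
elim: p x => [|y p IH] x //= ; rewrite negb_or => /andP[h1 h2].
rewrite -[0]addr0 lerD ?IH // /U (negbTE h1) /=.
by case: (_ && _) => /=; lra.
Qed.

Lemma pf_zero x p a b : ~~ step x p a b -> ~~ step x p b a -> pf x p a b = 0.
Proof.
move=> h1 h2; have := pf_nostep h1; have := pf_nostep h2.
rewrite pf_skew; lra.
Qed.

Lemma step_res x p a b : path (residual_arc f) x p -> step x p a b -> residual_arc f a b.
Proof.
elim: p x => [|y p IH] x //= /andP[hxy hp] /orP[/andP[/eqP -> /eqP ->] //|].
exact: IH.
Qed.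

Lemma seq_eps (X : eqType) (s : seq X) (r : X -> R) :
  (forall x, x \in s -> 0 < r x) -> exists2 eps : R, 0 < eps & forall x, x \in s -> eps <= r x.
Proof.
elim: s => [|y s IH] hs; first by exists 1.
have [eps he hle] : exists2 eps : R, 0 < eps & forall x, x \in s -> eps <= r x.
  by apply: IH => x hx; apply: hs; rewrite inE hx orbT.
exists (Num.min eps (r y)).
  by rewrite lt_min he hs // inE eqxx.
move=> x; rewrite inE => /orP[/eqP ->|hx]; first by rewrite ge_min lexx orbT.
by rewrite ge_min hle.
Qed.

Lemma no_aug p : is_max_flow f -> path (residual_arc f) sN p -> last sN p = tN -> False.
Proof.
move=> [_ hmax] hp hl.
pose n : R := (size p).+1%:R.
have n0 : 0 < n by rewrite ltr0n.
pose r (ab : node * node) : R :=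
  if cap R ab.1 ab.2 is Some c then (c - f ab.1 ab.2) / n else 1.
have hpos : forall ab, ab \in [seq ab <- enum (predT : pred (node * node)) | residual_arc f ab.1 ab.2] -> 0 < r ab.
  move=> [a b]; rewrite mem_filter /= => /andP[hr _]; rewrite /r /=.
  move: hr; rewrite /residual_arc; case: (cap R a b) => [c|] /andP[_ hc] //.
  by rewrite divr_gt0.
have [eps he hle] := seq_eps hpos.
have hle' : forall a b c, residual_arc f a b -> cap R a b = Some c -> eps * n <= c - f a b.
  move=> a b c hr hc; have := hle (a, b); rewrite mem_filter mem_enum /= hr /r /= hc.
  by move=> /(_ isT); rewrite ler_pdivlMr.
pose g a b := f a b + eps * pf sN p a b.
have gflow : is_flow g.
  split.
  - move=> a b; rewrite /g; case: (boolP (step sN p a b)) => hs.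
      have hr := step_res hp hs.
      case E: (cap R a b) => [c|] //=.
      have := hle' _ _ _ hr E.
      have := pf_le sN p a b.
      rewrite /n -addn1 natrD => h1 h2.
      have : eps * pf sN p a b <= eps * (size p)%:R by rewrite ler_wpM2l // ltW.
      lra.
    have h1 := pf_nostep hs.
    have h2 : eps * pf sN p a b <= 0 by rewrite pmulr_rle0.
    have := fcap a b; case: (cap R a b) => [c|] //=; lra.
  - by move=> a b; rewrite /g fskew pf_skew; lra.
  - move=> a ha1 ha2; rewrite /g big_split /= fcons // -mulr_sumr pf_sum hl.
    by rewrite (negbTE ha1) (negbTE ha2) subrr mulr0 addr0.
have := hmax g gflow.
have : flow_value g = flow_value f + eps.
  rewrite /flow_value /g big_split /= -mulr_sumr.
  suff -> : \sum_v pf sN p sN (Hv e h v) = 1 by rewrite mulr1.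
  have := pf_sum sN p sN; rewrite sum_node hl eqxx /=.
  have Z : forall y, ~~ is_arc sN y -> pf sN p sN y = 0.
    move=> y hy; apply: pf_zero; apply/negP => hst; have := step_res hp hst;
      rewrite /residual_arc ?(negbTE hy) // arc_sym (negbTE hy) //.
  have Zl : \sum_l pf sN p sN (Hl l) = 0 by apply: big1 => l _; apply: Z.
  rewrite (Z sN) // (Z tN) // Zl.
  by rewrite !add0r addr0 subr0.
move=> ->; lra.
Qed.


Lemma comb_real (W : {set T}) (L : pred (lam_t e h)) :
  (forall l, L l -> val l \subset W) ->
  \sum_(v in W) ((hdeg e h v)%:R : R) <=
  \sum_(v in W) (h%:R * rho_star e h R + \sum_(l | ~~ L l) ((is_clique e h (v |: val l))%:R : R)).
Proof.
move=> hL.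
have [->|W0] := eqVneq W set0; first by rewrite !big_set0.
have hnat : (\sum_(v in W) hdeg e h v <= h * mu e h W +
    \sum_(v in W) #|[set l | ~~ L l & is_clique e h (v |: val l)]|)%N.
  rewrite -double_count -big_split /=; apply: leq_sum => v hv; exact: per_vertex.
rewrite -natr_sum; apply: (le_trans (y := (h * mu e h W +
    \sum_(v in W) #|[set l | ~~ L l & is_clique e h (v |: val l)]|)%:R)).
  by rewrite ler_nat.
rewrite natrD natrM natr_sum big_split /= sumr_const; apply: lerD.
  by rewrite -[X in _ <= X]mulr_natr -mulrA ler_wpM2l ?ler0n // mu_le.
apply: ler_sum => v _; rewrite -sum1_card natr_sum big_mkcond [X in _ <= X]big_mkcond /=.
apply: ler_sum => l _; rewrite !inE.
by case: (L l); case: (is_clique e h _).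
Qed.

Lemma saturate : is_max_flow f -> forall v, f sN (Hv e h v) = (hdeg e h v)%:R.
Proof.
move=> hmax.
pose Z x := connect (residual_arc f) sN x.
have ZnT : ~~ Z tN.
  by apply/negP => /connectP [p hp hl]; apply: (no_aug hmax hp (esym hl)).
have Zcl : forall x y, Z x -> residual_arc f x y -> Z y.
  by move=> x y hx hxy; apply: connect_trans hx (connect1 hxy).
have upper : forall v, f sN (Hv e h v) <= (hdeg e h v)%:R by move=> v; have := fcap sN (Hv e h v).
have outside : forall v, ~~ Z (Hv e h v) -> (hdeg e h v)%:R <= f sN (Hv e h v).
  move=> v hv; have : ~~ residual_arc f sN (Hv e h v).
    by apply/negP => hr; move: hv; rewrite (Zcl _ _ (connect0 _ _) hr).
  by move/L2.
pose B x := Z x && (if x is inr _ then true else false).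
have hB : \sum_(x | B x) \sum_(y | ~~ B y) f x y = 0.
  by apply: cut_sum => -[[]|[v|l]]; rewrite /B ?andbF.
pose c v := \sum_(l | ~~ Z (Hl l)) lb (Hv e h v) (Hl l).
pose G (x : node) := match x with
  | inr (inl v) => - f sN (Hv e h v) + h%:R * rho_star e h R + c v
  | _ => 0 end.
have inner : forall x, B x -> G x <= \sum_(y | ~~ B y) f x y.
  move=> x hx; rewrite (bigD1 sN) /=; last by rewrite /B andbF.
  have : \sum_(y | ~~ B y && (y != sN)) lb x y <= \sum_(y | ~~ B y && (y != sN)) f x y.
    apply: ler_sum => y /andP[hy1 hy2]; apply: L2; apply/negP => hr.
    have zy := Zcl _ _ (proj1 (andP hx)) hr.
    clear hr; move: hy1 hy2 zy; case: y => [[]|[w|m]] //=; first by move=> _ _; rewrite (negbTE ZnT).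
    - by rewrite /B => /negP; move=> H _ zy; apply: H; rewrite zy.
    - by rewrite /B => /negP; move=> H _ zy; apply: H; rewrite zy.
  move: hx; case: x => [[]|[v|l]]; rewrite /B ?andbF //= => _.
  - have lbsum : h%:R * rho_star e h R + c v <= \sum_(y | ~~ B y && (y != sN)) lb (Hv e h v) y.
      rewrite big_mkcond sum_node /c [in X in _ <= X]big_mkcond /=.
      rewrite ?andbF ?andbT /B ?andbF ?andbT /= ?add0r.
      have EL : \sum_l (if ~~ (Z (Hl l) && true) && true then lb (Hv e h v) (Hl l) else 0)
          = \sum_(l | ~~ Z (Hl l)) lb (Hv e h v) (Hl l).
        by rewrite [RHS]big_mkcond; apply: eq_bigr => l _; rewrite !andbT.
      have hV : 0 <= \sum_i (if ~~ (Z (Hv e h i) && true) && true then lb (Hv e h v) (Hv e h i) else 0).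
        by apply: sumr_ge0 => i _; case: ifP => // _; apply: lb_ge0.
      rewrite EL; move: hV; rewrite {1 3}/lb /=; lra.
    rewrite fskew opprK => H; rewrite -addrA lerD2l; exact: le_trans lbsum H.
  - move=> H; apply: addr_ge0.
      by rewrite fskew oppr_ge0; apply: fcap0.
    apply: le_trans H; apply: sumr_ge0 => y _; exact: lb_ge0.
have sumG : \sum_(v in [set v | Z (Hv e h v)]) G (Hv e h v) <= 0.
  have : \sum_(x | B x) G x <= \sum_(x | B x) \sum_(y | ~~ B y) f x y.
    by apply: ler_sum => x hx; exact: inner x hx.
  rewrite hB.
  suff -> : \sum_(x | B x) G x = \sum_(v in [set v | Z (Hv e h v)]) G (Hv e h v) by [].
  rewrite big_mkcond sum_node /= [RHS]big_mkcond /= /B /= !andbF !add0r.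
  rewrite [X in _ + X]big1 ?addr0; last by move=> l _; case: ifP.
  by apply: eq_bigr => v _; rewrite inE andbT.
have ceq : forall v, c v = \sum_(l | ~~ Z (Hl l)) ((is_clique e h (v |: val l))%:R : R).
  by move=> v; apply: eq_bigr => l _; rewrite /lb /=; case: ifP.
have hcomb := @comb_real [set v | Z (Hv e h v)] (fun l => Z (Hl l)).
have hcl : forall l, Z (Hl l) -> val l \subset [set v | Z (Hv e h v)].
  move=> l hl; apply/subsetP => u hu; rewrite inE; apply: Zcl hl _.
  by rewrite /residual_arc /= hu.
have := hcomb hcl.
have E2 : \sum_(v in [set v | Z (Hv e h v)]) G (Hv e h v) =
  \sum_(v in [set v | Z (Hv e h v)]) (h%:R * rho_star e h R +
      \sum_(l | ~~ Z (Hl l)) ((is_clique e h (v |: val l))%:R : R))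
  - \sum_(v in [set v | Z (Hv e h v)]) f sN (Hv e h v).
  rewrite -sumrB; apply: eq_bigr => v _ /=; rewrite ceq; lra.
move=> H1.
have H3 : \sum_(v in [set v | Z (Hv e h v)]) ((hdeg e h v)%:R - f sN (Hv e h v)) = 0.
  apply/eqP; rewrite eq_le; apply/andP; split.
    rewrite sumrB; move: sumG; rewrite E2; lra.
  by apply: sumr_ge0 => v _; rewrite subr_ge0.
move=> v; case: (boolP (Z (Hv e h v))) => hz.
  have hz' : v \in [set v | Z (Hv e h v)] by rewrite inE.
  have hnn : forall i, i \in [set v | Z (Hv e h v)] -> 0 <= (hdeg e h i)%:R - f sN (Hv e h i).
    by move=> i _; rewrite subr_ge0.
  have /eqP := psumr_eq0P hnn H3 hz'.
  by rewrite subr_eq0 eq_sym => /eqP.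
by apply/eqP; rewrite eq_le upper outside.
Qed.


Lemma reach : is_max_flow f -> (forall v : T, exists S : {set T}, is_clique e h S /\ v \in S) ->
  forall v, connect (residual_arc f) tN (Hv e h v).
Proof.
move=> hmax hcl v0; apply/negPn/negP => hn.
pose Y x := connect (residual_arc f) tN x.
pose A (x : node) := ~~ Y x && (if x is inr _ then true else false).
have hA : \sum_(x | A x) \sum_(y | ~~ A y) f x y = 0.
  by apply: cut_sum => -[[]|[v|l]]; rewrite /A ?andbF.
have capS : forall x : node, f x sN <= 0.
  by move=> x; apply: fcap0; case: x => [[]|[v|l]].
have bound : forall x, A x -> \sum_(y | ~~ A y) f x y <= f x sN.
  move=> x hx; rewrite (bigD1 sN) /=; last by rewrite /A andbF.
  rewrite -[X in _ <= X]addr0 lerD2l; apply: sumr_le0 => y /andP[hy1 hy2].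
  have hY : Y y.
    move: hy1 hy2; case: y => [[]|[w|m]] //=; first by move=> _ _; exact: connect0.
    - by rewrite /A andbT negbK.
    - by rewrite /A andbT negbK.
  have hr : ~~ residual_arc f y x.
    apply/negP => hr; move: hx; rewrite /A => /andP[/negP hx _]; apply: hx.
    exact: connect_trans hY (connect1 hr).
  have := L2 hr; rewrite (fskew y x); have := lb_ge0 y x; lra.
have hd : (0 : R) < (hdeg e h v0)%:R.
  rewrite ltr0n; have [S [hS hv]] := hcl v0; apply/card_gt0P; exists S; rewrite inE hS hv.
  by [].
have hAv : A (Hv e h v0) by rewrite /A andbT.
have : \sum_(x | A x) f x sN < 0.
  rewrite (bigD1 (Hv e h v0)) //= fskew saturate //.
  have : \sum_(x | A x && (x != Hv e h v0)) f x sN <= 0 by apply: sumr_le0 => x _.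
  lra.
have : \sum_(x | A x) \sum_(y | ~~ A y) f x y <= \sum_(x | A x) f x sN by apply: ler_sum.
lra.
Qed.

End Basics.

Theorem lemma5 (T : finType) (e : rel T) (h : nat) (R : realType)
  (f : hnode e h -> hnode e h -> R) :
  simple_graph e -> (2 <= h)%N ->
  (forall v : T, exists S : {set T}, is_clique e h S /\ v \in S) ->
  is_max_flow f ->
  forall v : T, res_reachable f (Ht e h) (Hv e h v).
Proof.
move=> _ _ hcl hmax v.
have hf : is_flow f by case: hmax.
have /connectP [p hp hl] := reach hf hmax hcl v.
by exists p; split.
Qed.
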